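(* Let $R:\mathbb R^d\to(0,\infty)$ satisfy $|R(x)-R(y)|\le|x-y|$ for all $x,y$. Let $\gamma$ be a piecewise $C^1$ curve from $x$ to $y$, and define its index $N(\gamma)$ as follows: set $x_0=x$; having $x_j$, let $[x_j,y]_\gamma$ denote the part of $\gamma$ from $x_j$ to $y$; if $[x_j,y]_\gamma\subset B(x_j;\frac12R(x_j))$, stop with $x_{j+1}=y$ and $N(\gamma)=j+1$; otherwise let $x_{j+1}$ be the first point of $[x_j,y]_\gamma$ lying on the sphere $\partial B(x_j;\frac12R(x_j))$ and continue. Then \[ N(\gamma)\le 3\int_\gamma \frac{|dz|}{R(z)}+1. \]
   Context: $B(x;r)=\{y:|x-y|\le r\}$ denotes the closed Euclidean ball. *)

(* Defs.v *)
(* Points of R^d are row vectors 'rV[R]_d,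
   with the Euclidean norm defined explicitly below (the library's norm
   on matrices is the max-norm). *)
From HB Require Import structures.
From mathcomp Require Import all_boot all_order all_algebra.
From mathcomp Require Import all_classical all_reals all_analysis.
Set Implicit Arguments. Unset Strict Implicit. Unset Printing Implicit Defensive.
Import Order.TTheory GRing.Theory Num.Theory.
Import numFieldNormedType.Exports.
Local Open Scope classical_set_scope.
Local Open Scope ring_scope.

Definition enorm (R : realType) (d : nat) (v : 'rV[R]_d) : R :=
  Num.sqrt (\sum_(i < d) (v ord0 i) ^+ 2).

Definition piecewise_C1 (R : realType) (d : nat) (a b : R)
    (g : R -> 'rV[R]_d) : Prop :=
  {within `[a, b], continuous g} /\
  exists (k : nat) (p : nat -> R),
    [/\ p 0%N = a, p k = b, (forall i, (i < k)%N -> p i < p i.+1) &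
     forall i, (i < k)%N -> exists g' : R -> 'rV[R]_d,
        {within `[p i, p i.+1], continuous g'} /\
        forall t, p i < t < p i.+1 -> is_derive t 1 g (g' t)].

(* The line integral  \int_g |dz| / Rf(z) = \int_a^b |g'(t)| / Rf(g t) dt
   (extended-real valued Lebesgue integral). *)
Definition arc_integral (R : realType) (d : nat) (Rf : 'rV[R]_d -> R)
    (a b : R) (g : R -> 'rV[R]_d) : \bar R :=
  (\int[lebesgue_measure]_(t in `[a, b]) (enorm ('D_1 g t) / Rf (g t))%:E)%E.

Definition stays_in_ball (R : realType) (d : nat) (Rf : 'rV[R]_d -> R)
    (b : R) (g : R -> 'rV[R]_d) (t : R) : Prop :=
  forall s, t <= s <= b -> enorm (g s - g t) <= Rf (g t) / 2.

Definition first_on_sphere (R : realType) (d : nat) (Rf : 'rV[R]_d -> R)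
    (b : R) (g : R -> 'rV[R]_d) (t t' : R) : Prop :=
  [/\ t <= t' <= b, enorm (g t' - g t) = Rf (g t) / 2 &
      forall u, t <= u < t' -> enorm (g u - g t) != Rf (g t) / 2].

(* has_index Rf b g t n : the construction started at x_j = g t stops after
   exactly n further points, i.e. the index of [g t, y]_g is n.
   The index N(g) of the whole curve is the n with has_index Rf b g a n. *)
Inductive has_index (R : realType) (d : nat) (Rf : 'rV[R]_d -> R)
    (b : R) (g : R -> 'rV[R]_d) : R -> nat -> Prop :=
| has_index_stop t : stays_in_ball Rf b g t -> has_index Rf b g t 1
| has_index_step t t' n : ~ stays_in_ball Rf b g t ->
    first_on_sphere Rf b g t t' -> has_index Rf b g t' n ->
    has_index Rf b g t n.+1.

(* Main.v *)
Require Import Defs.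
From HB Require Import structures.
From mathcomp Require Import all_boot all_order all_algebra.
From mathcomp Require Import all_classical all_reals all_analysis.
From mathcomp Require Import ring lra measurable_realfun.
Import Order.TTheory GRing.Theory Num.Theory.
Import numFieldNormedType.Exports.
Local Open Scope classical_set_scope.
Local Open Scope ring_scope.

Section LinAlg.
Context {R : realType} {d : nat}.
Implicit Types v w x y : 'rV[R]_d.

Lemma le_of_sq (a b : R) : 0 <= b -> a ^+ 2 <= b ^+ 2 -> a <= b.
Proof. move=> b0 h; rewrite -subr_ge0; nra. Qed.

Definition dot w v : R := \sum_(i < d) w ord0 i * v ord0 i.

Lemma sumsq_ge0 v : 0 <= \sum_(i < d) (v ord0 i) ^+ 2.
Proof. by apply: sumr_ge0 => i _; exact: sqr_ge0. Qed.

Lemma enorm_ge0 v : 0 <= enorm v.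
Proof. exact: sqrtr_ge0. Qed.

Lemma enorm_sq v : enorm v ^+ 2 = \sum_(i < d) (v ord0 i) ^+ 2.
Proof. by rewrite /enorm sqr_sqrtr // sumsq_ge0. Qed.

Lemma dot_self v : dot v v = enorm v ^+ 2.
Proof. by rewrite enorm_sq /dot; apply: eq_bigr => i _; rewrite expr2. Qed.

Lemma dotZl c w v : dot (c *: w) v = c * dot w v.
Proof. by rewrite /dot mulr_sumr; apply: eq_bigr => i _; rewrite mxE mulrA. Qed.

Lemma dotBr w u v : dot w (u - v) = dot w u - dot w v.
Proof.
rewrite /dot -sumrB; apply: eq_bigr => i _; rewrite !mxE mulrBr //.
Qed.

Lemma dotC w v : dot w v = dot v w.
Proof. by apply: eq_bigr => i _; rewrite mulrC. Qed.

Lemma CS_sq w v : dot w v ^+ 2 <= enorm w ^+ 2 * enorm v ^+ 2.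
Proof.
rewrite !enorm_sq.
set A := \sum_(i < d) (w ord0 i) ^+ 2.
set B := \sum_(i < d) (v ord0 i) ^+ 2.
set C := dot w v.
have A0 : 0 <= A by exact: sumsq_ge0.
have [A00|Apos] := eqVneq A 0.
  have wi : forall i, w ord0 i = 0.
    move=> i; apply/eqP; rewrite -sqrf_eq0; apply/eqP.
    by move: A00 => /psumr_eq0P -> // j _; exact: sqr_ge0.
  have -> : C = 0 by rewrite /C /dot big1 // => i _; rewrite wi mul0r.
  by rewrite expr0n /= mulr_ge0 // sumsq_ge0.
have Ap : 0 < A by rewrite lt_def Apos A0.
have E : \sum_(i < d) (A * v ord0 i - C * w ord0 i) ^+ 2
   = A * (A * B - C ^+ 2).
  transitivity (\sum_(i < d) (A ^+ 2 * (v ord0 i) ^+ 2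
      - (2 * A * C) * (w ord0 i * v ord0 i) + C ^+ 2 * (w ord0 i) ^+ 2)).
    by apply: eq_bigr => i _; ring.
  rewrite big_split /= sumrB -!mulr_sumr -/B -/A.
  rewrite (_ : \sum_(i < d) (w ord0 i * v ord0 i) = C) //.
  ring.
have : 0 <= A * (A * B - C ^+ 2).
  by rewrite -E; apply: sumr_ge0 => i _; exact: sqr_ge0.
rewrite pmulr_rge0 // subr_ge0 //.
Qed.

Lemma CS w v : dot w v <= enorm w * enorm v.
Proof.
have [C0|C0] := leP (dot w v) 0.
  by apply: le_trans C0 _; rewrite mulr_ge0 // enorm_ge0.
apply: le_of_sq; first by rewrite mulr_ge0 // enorm_ge0.
by rewrite exprMn CS_sq.
Qed.

Lemma enormD x y : enorm (x + y) <= enorm x + enorm y.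
Proof.
apply: le_of_sq; first by rewrite addr_ge0 // enorm_ge0.
have -> : enorm (x + y) ^+ 2 = enorm x ^+ 2 + 2 * dot x y + enorm y ^+ 2.
  rewrite !enorm_sq /dot mulr_sumr -!big_split /=.
  by apply: eq_bigr => i _; rewrite mxE; ring.
have := CS x y; nra.
Qed.

Lemma enormN x : enorm (- x) = enorm x.
Proof.
by rewrite /enorm; congr Num.sqrt; apply: eq_bigr => i _; rewrite mxE sqrrN.
Qed.

Lemma enormB x y : enorm (x - y) = enorm (y - x).
Proof. by rewrite -enormN opprB. Qed.

Lemma enorm_rev x y : `|enorm x - enorm y| <= enorm (x - y).
Proof.
rewrite ler_norml; apply/andP; split.
  have := enormD (y - x) x; rewrite subrK enormB; lra.
have := enormD (x - y) y; rewrite subrK; lra.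
Qed.

Lemma enorm0 : enorm (0 : 'rV[R]_d) = 0.
Proof.
by rewrite /enorm big1 ?sqrtr0 // => i _; rewrite mxE expr0n.
Qed.

Lemma coord_le_norm v i : `|v ord0 i| <= `|v|.
Proof.
rewrite [X in _ <= X]/Num.Def.normr /= mx_normrE.
by apply: le_trans (le_bigmax _ _ (ord0, i)); rewrite /=.
Qed.

Definition Kd : R := d%:R + 1.

Lemma Kd_gt0 : 0 < Kd.
Proof. by rewrite /Kd ltr_wpDl. Qed.

Lemma enorm_le v : enorm v <= Kd * `|v|.
Proof.
have Kn : 0 <= Kd * `|v| by rewrite mulr_ge0 // ltW // Kd_gt0.
apply: le_of_sq => //; rewrite enorm_sq.
apply: (@le_trans _ _ (\sum_(i < d) `|v| ^+ 2)).
  apply: ler_sum => i _; rewrite -[X in X <= _]real_normK ?num_real //.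
  have := coord_le_norm v i; have := normr_ge0 (v ord0 i); nra.
rewrite sumr_const card_ord exprMn -mulr_natl ler_wpM2r // ?sqr_ge0 //.
rewrite /Kd natr1 -natrX ler_nat expnS expn1.
by rewrite (leq_trans (leqnSn d)) // leq_pmulr.
Qed.

Lemma dot_lip w x y : `|dot w x - dot w y| <= enorm w * enorm (x - y).
Proof.
rewrite -dotBr ler_norml; apply/andP; split; last exact: CS.
have h := CS w (y - x); rewrite dotBr enormB in h.
rewrite dotBr; lra.
Qed.

End LinAlg.

Section Cont.
Context {R : realType} {d : nat}.

Lemma lip_cont (F : 'rV[R]_d -> R) (c : R) : 0 <= c ->
  (forall x y, `|F x - F y| <= c * enorm (x - y)) -> continuous F.
Proof.
move=> c0 h x; apply/(@cvgrPdist_lt _ _ _ _ (nbhs_filter x)) => e e0.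
have K0 := @Kd_gt0 R d.
have dp : 0 < e / ((c + 1) * (@Kd R d)) by rewrite divr_gt0 // mulr_gt0 // ltr_wpDl.
apply/nbhs_ballP; exists (e / ((c + 1) * (@Kd R d))) => // y /= hy.
rewrite -ball_normE /= in hy.
apply: (le_lt_trans (h x y)).
apply: (le_lt_trans (ler_wpM2l c0 (enorm_le _))).
rewrite ltr_pdivlMr ?mulr_gt0 ?ltr_wpDl // in hy.
have n0 := normr_ge0 (x - y).
nra.
Qed.

Lemma within_pt (A : set R) (V : normedModType R) (f : R -> V) x :
  {within A, continuous f} -> A x -> forall e, 0 < e ->
  exists2 del, 0 < del & forall y, A y -> `|x - y| < del -> `|f x - f y| < e.
Proof.
move=> cf Ax e e0.
move/subspace_continuousP: cf => /(_ x Ax).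
move/(@cvgrPdist_lt _ _ _ _ (within_filter _ _))/(_ e e0).
case/nbhs_ballP => del del0 H; exists del => // y Ay xy.
by apply: H => //.
Qed.

Lemma cont_comp_within (A : set R) (V W : topologicalType) (g : R -> V)
  (F : V -> W) : {within A, continuous g} -> continuous F ->
  {within A, continuous (F \o g)}.
Proof.
by move=> cg cF x; exact: (continuous_comp (cg x) (cF (g x))).
Qed.

Lemma enorm_cont (c : 'rV[R]_d) : continuous (fun v : 'rV[R]_d => enorm (v - c)).
Proof.
apply: (@lip_cont _ 1) => // x y; rewrite mul1r.
by rewrite (le_trans (enorm_rev _ _)) // opprB addrA subrK.
Qed.

Lemma enorm_cont0 : continuous (fun v : 'rV[R]_d => enorm v).
Proof.
apply: (@lip_cont _ 1) => // x y; rewrite mul1r; exact: enorm_rev.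
Qed.

Lemma dot_cont (w : 'rV[R]_d) : continuous (dot w).
Proof.
apply: (@lip_cont _ (enorm w)); first exact: enorm_ge0.
exact: dot_lip.
Qed.

End Cont.
Arguments cont_comp_within {R A V W g F}.
Arguments within_pt {R A V f x}.

Section Hit.
Context {R : realType} {d : nat} (Rf : 'rV[R]_d -> R)
  (Rf_pos : forall x, 0 < Rf x) (a b : R) (g : R -> 'rV[R]_d)
  (gc : {within `[a, b], continuous g}).

Lemma gc_sub s u : a <= s -> u <= b -> {within `[s, u], continuous g}.
Proof.
move=> aS ub; apply: continuous_subspaceW gc.
move=> x /=; rewrite !in_itv /= => /andP[h1 h2].
by rewrite (le_trans aS h1) (le_trans h2 ub).
Qed.

Lemma hc_sub t s u : a <= s -> u <= b ->
  {within `[s, u], continuous (fun x => enorm (g x - g t))}.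
Proof.
move=> aS ub.
exact: (cont_comp_within (gc_sub _ _ aS ub) (enorm_cont (g t))).
Qed.

Lemma first_hit t : a <= t <= b -> ~ stays_in_ball Rf b g t ->
  exists t', [/\ first_on_sphere Rf b g t t', t < t' &
    forall u, t <= u <= t' -> enorm (g u - g t) <= Rf (g t) / 2].
Proof.
move=> /andP[aT tb] nst.
set r := Rf (g t) / 2.
have r0 : 0 < r by rewrite /r divr_gt0 // Rf_pos.
set h := fun u => enorm (g u - g t).
have ht : h t = 0 by rewrite /h subrr enorm0.
have h0 : forall u, 0 <= h u by move=> u; exact: enorm_ge0.
have [s [/andP[ts sb] hs]] : exists s, t <= s <= b /\ r < h s.
  move/existsNP: nst => [s] /not_implyP [sb /negP]; rewrite -ltNge => hs.
  by exists s.
have [c cts hc] : exists2 c, c \in `[t, s] & h c = r.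
  apply: IVT => //; first exact: hc_sub.
  by rewrite ht (min_idPl (h0 s)) (max_idPr (h0 s)) ltW // ltW.
move: cts; rewrite in_itv /= => /andP[tc cs].
set S := [set u | t <= u <= b /\ h u = r].
have Sc : S c by split => //; rewrite tc (le_trans cs sb).
have lbS : lbound S t by move=> u [/andP[]].
have hlb : has_lbound S by exists t.
have neS : S !=set0 by exists c.
set t' := inf S.
have tt' : t <= t' by exact: lb_le_inf.
have t'c : t' <= c by exact: ge_inf.
have t'b : t' <= b by rewrite (le_trans t'c) // (le_trans cs sb).
have ht' : h t' = r.
  apply/eqP/negPn/negP => hne.
  have e0 : 0 < `|h t' - r| by rewrite normr_gt0 subr_eq0.
  have t'in : t' \in `[t, b] by rewrite /= in_itv /= tt' t'b.
  have [del del0 Hdel] := within_pt (hc_sub t _ _ aT (lexx b)) t'in _ e0.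
  have [u Su ut] := inf_adherent del0 (conj neS hlb).
  have t'u : t' <= u by exact: ge_inf.
  case: Su => /andP[tu ub] hu.
  have := Hdel u; rewrite /= in_itv /= tu ub => /(_ isT).
  rewrite -/(h u) -/(h t') hu ltxx => H; suff : false by []; apply: H.
  by rewrite ler0_norm ?subr_le0 // opprB ltrBlDl.
exists t'; split.
- split; first by rewrite tt' t'b.
    by [].
  move=> u /andP[tu ut']; apply/negP => /eqP hu.
  have : S u by split => //; rewrite tu (le_trans (ltW ut') t'b).
  by move/ge_inf => /(_ hlb); rewrite leNgt ut'.
- rewrite lt_neqAle tt' andbT; apply/eqP => tt'E.
  by move: ht'; rewrite -tt'E ht => r0E; move: r0; rewrite -r0E ltxx.
- move=> u /andP[tu ut']; rewrite leNgt; apply/negP => hu.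
  have [c' ctu hc'] : exists2 c', c' \in `[t, u] & h c' = r.
    apply: IVT => //; first exact: (hc_sub _ _ _ aT) (le_trans ut' t'b).
    by rewrite ht (min_idPl (h0 u)) (max_idPr (h0 u)) ltW // ltW.
  move: ctu; rewrite in_itv /= => /andP[tc' c'u].
  have : S c' by split => //; rewrite tc' /= (le_trans c'u (le_trans ut' t'b)).
  move/ge_inf => /(_ hlb) t'c'.
  have c'E : c' = u by apply/eqP; rewrite eq_le c'u (le_trans ut' t'c').
  by move: hu; rewrite -c'E -/(h c') hc' ltxx.
Qed.

End Hit.

Lemma dval {R : realType} {V W : normedModType R} {a v : V} {f : V -> W} {df : W} :
  is_derive a v f df -> 'D_v f a = df.
Proof. by move=> H; apply: derive_val. Qed.

Lemma dex {R : realType} {V W : normedModType R} {a v : V} {f : V -> W} {df : W} :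
  is_derive a v f df -> derivable f a v.
Proof. by move=> H; apply: ex_derive. Qed.

Lemma dot_derive {R : realType} {d : nat} (g : R -> 'rV[R]_d) (w : 'rV[R]_d)
  (x : R) (D : 'rV[R]_d) :
  is_derive x 1 g D -> is_derive x 1 (fun y => dot w (g y)) (dot w D).
Proof.
move=> hD.
have dg := dex hD; have Dv := dval hD.
have coord : forall j, is_derive x 1 (fun y => g y ord0 j) (D ord0 j).
  move=> j.
  have dj : derivable (fun y => g y ord0 j) x 1.
    by move/derivable_mxP: dg; apply.
  apply: DeriveDef => //.
  by rewrite -Dv (derive_mx dg) mxE.
have E : (fun y => dot w (g y)) =
    \sum_(j < d) (w ord0 j *: (fun y => g y ord0 j)).
  by rewrite fct_sumE; apply/funext => y; rewrite /dot; apply: eq_bigr.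
rewrite E /dot.
apply: is_derive_sum => j.
Qed.

Section Integ.
Context {R : realType} {d : nat} (Rf : 'rV[R]_d -> R)
  (Rf_pos : forall x, 0 < Rf x)
  (Rf_lip : forall x y, `|Rf x - Rf y| <= enorm (x - y))
  (a b : R) (g : R -> 'rV[R]_d)
  (gc : {within `[a, b], continuous g})
  (k : nat) (p : nat -> R) (p0 : p 0%N = a) (pk : p k = b)
  (pinc : forall i, (i < k)%N -> p i < p i.+1)
  (gd : forall i, (i < k)%N -> exists g' : R -> 'rV[R]_d,
        {within `[p i, p i.+1], continuous g'} /\
        forall t, p i < t < p i.+1 -> is_derive t 1 g (g' t)).

Definition ff (x : R) : R := enorm ('D_1 g x) / Rf (g x).
Definition J (s u : R) : \bar R :=
  (\int[lebesgue_measure]_(x in `[s, u]) (ff x)%:E)%E.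

Lemma ff_ge0 x : 0 <= ff x.
Proof. by rewrite /ff divr_ge0 // ?enorm_ge0 // ltW. Qed.

Lemma p_mono i j : (i <= j)%N -> (j <= k)%N -> p i <= p j.
Proof.
move=> ij jk; elim: j ij jk => [|j IH] ij jk.
  by move: ij; rewrite leqn0 => /eqP ->.
move: ij; rewrite leq_eqVlt => /orP[/eqP -> //|].
rewrite ltnS => ij.
by apply: le_trans (IH ij (ltnW jk)) (ltW (pinc _ jk)).
Qed.

Lemma p_ab i : (i <= k)%N -> a <= p i <= b.
Proof.
move=> ik; rewrite -p0 -pk !p_mono //.
Qed.

Lemma Rf_cont : continuous Rf.
Proof.
apply: (@lip_cont _ _ Rf 1) => // x y; rewrite mul1r; exact: Rf_lip.
Qed.

Lemma ff_cont i x : (i < k)%N -> p i < x < p i.+1 -> {for x, continuous ff}.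
Proof.
move=> ik xi.
have [g' [g'c g'd]] := gd _ ik.
have xin : x \in `]p i, p i.+1[ by rewrite in_itv /=.
have Dn : \forall y \near x, g' y = 'D_1 g y.
  near=> y; apply: esym; apply: derive_val; apply: g'd.
  by have : y \in `]p i, p i.+1[; [near: y; exact: near_in_itvoo | rewrite in_itv].
have g'x : {for x, continuous g'}.
  by move/(continuous_within_itvP _ (pinc _ ik)): g'c => [+ _ _]; apply.
have Dx : {for x, continuous ('D_1 g)}.
  apply: cvg_trans (near_eq_cvg Dn) _.
  rewrite (dval (g'd x xi)); exact: g'x.
have gx : {for x, continuous g}.
  apply: differentiable_continuous; apply/derivable1_diffP.
  exact: dex (g'd x xi).
have Rx : {for x, continuous (fun y => Rf (g y))}.
  exact: continuous_comp gx (Rf_cont (g x)).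
have Ex : {for x, continuous (fun y => enorm ('D_1 g y))}.
  exact: continuous_comp Dx (enorm_cont0 ('D_1 g x)).
apply: cvgM => //; apply: cvgV => //.
by rewrite gt_eqF.
Unshelve. all: by end_near. Qed.

Lemma ff_meas_open i : (i < k)%N -> measurable_fun `]p i, p i.+1[ ff.
Proof.
move=> ik; apply: open_continuous_measurable_fun => // x.
rewrite inE /= in_itv /= => xi; exact: ff_cont ik xi.
Qed.

Lemma ff_meas_pre j : (j <= k)%N -> measurable_fun `[a, p j] ff.
Proof.
elim: j => [_|j IH jk].
  by rewrite p0 set_itv1; exact: measurable_fun_set1.
have pj := pinc _ jk.
have apj : a <= p j by case/andP: (p_ab j (ltnW jk)).
have E : [set` `[a, p j.+1]] = [set` `[a, p j]] `|` ([set` `]p j, p j.+1[] `|` [set p j.+1]).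
  apply/seteqP; split => x /=; rewrite !in_itv /=.
    move=> /andP[ax xp]; have [xpj|xpj] := leP x (p j).
      by left; rewrite ax.
    right; move: xp; rewrite le_eqVlt => /orP[/eqP ->|xp]; first by right.
    by left; rewrite xp.
  case=> [|[|->]]; rewrite /= ?in_itv /=.
  move=> /andP[ax xp].
  2: move=> /andP[xp1 xp2].
  - by rewrite ax (le_trans xp (ltW pj)).
  - by rewrite (le_trans apj (ltW xp1)) ltW.
  - by rewrite (le_trans apj (ltW pj)) lexx.
have m1 : measurable [set` `]p j, p j.+1[] by exact: measurable_itv.
have m2 : measurable [set p j.+1] by exact: measurable_set1.
have m3 : measurable [set` `[a, p j]] by exact: measurable_itv.
rewrite E; apply/(measurable_funU _ m3 (measurableU _ _ m1 m2)); split.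
  exact: IH (ltnW jk).
apply/(measurable_funU _ m1 m2); split; first exact: ff_meas_open.
exact: measurable_fun_set1.
Qed.

Lemma ffE_meas (A : set R) : measurable A -> A `<=` `[a, b] ->
  measurable_fun A (fun x => (ff x)%:E).
Proof.
move=> mA Ab; apply/measurable_EFinP.
apply: (measurable_funS _ Ab) => //.
by rewrite -pk; apply: ff_meas_pre.
Qed.

Lemma J_add s v u : a <= s -> s <= v -> v <= u -> u <= b ->
  J s u = (J s v + J v u)%E.
Proof.
move=> aS sv vu ub.
have E : [set` `[s, u]] = [set` `[s, v]] `|` [set` `]v, u]].
  apply/seteqP; split => x /=; rewrite !in_itv /=.
    move=> /andP[sx xu]; have [xv|xv] := leP x v.
      by left; rewrite sx.
    by right; rewrite xu.
  case; rewrite /= ?in_itv /= => /andP[h1 h2].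
  - by rewrite h1 (le_trans h2 vu).
  - by rewrite (le_trans sv (ltW h1)) h2.
have sub : [set` `[s, u]] `<=` [set` `[a, b]].
  move=> x /=; rewrite !in_itv /= => /andP[h1 h2].
  by rewrite (le_trans aS h1) (le_trans h2 ub).
rewrite /J E ge0_integral_setU //.
- rewrite integral_itv_obnd_cbnd //.
  apply: ffE_meas => //; apply: subset_trans sub.
  by rewrite E; exact: subsetUr.
- by rewrite -E; apply: ffE_meas.
- by move=> x _; rewrite lee_fin ff_ge0.
- rewrite disj_set2E; apply/eqP/seteqP; split => // x [] /=.
  by rewrite !in_itv /= => /andP[_ h1] /andP[h2 _]; move: (le_lt_trans h1 h2); rewrite ltxx.
Qed.

Lemma J_ge0 s u : (0 <= J s u)%E.
Proof. by apply: integral_ge0 => x _; rewrite lee_fin ff_ge0. Qed.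

Lemma SP w i s u : (i < k)%N -> p i <= s -> s <= u -> u <= p i.+1 ->
  (forall x, s <= x <= u -> dot w ('D_1 g x) <= ff x) ->
  ((dot w (g u) - dot w (g s))%:E <= J s u)%E.
Proof.
move=> ik pis su upi H.
have [suE|su'] := eqVneq s u.
  by rewrite suE subrr J_ge0.
have su2 : s < u by rewrite lt_neqAle su' su.
have [g' [g'c g'd]] := gd _ ik.
have aS : a <= s by case/andP: (p_ab i (ltnW ik)) => h _; exact: le_trans h pis.
have ub : u <= b by case/andP: (p_ab i.+1 ik) => _ h; exact: le_trans upi h.
set phi := fun x => dot w (g x).
set psi := fun x => dot w (g' x).
have sub : [set` `[s, u]] `<=` [set` `[p i, p i.+1]].
  move=> x /=; rewrite !in_itv /= => /andP[h1 h2].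
  by rewrite (le_trans pis h1) (le_trans h2 upi).
have psic : {within `[s, u], continuous psi}.
  exact: (cont_comp_within (continuous_subspaceW sub g'c) (dot_cont w)).
have phic : {within `[s, u], continuous phi}.
  exact: (cont_comp_within (@gc_sub R d a b g gc s u aS ub) (dot_cont w)).
have xin x : s < x < u -> p i < x < p i.+1.
  by case/andP => h1 h2; rewrite (le_lt_trans pis h1) (lt_le_trans h2 upi).
have der x : s < x < u -> is_derive x 1 phi (psi x).
  by move=> /xin xi; exact: dot_derive (g'd x xi).
have FTC : (\int[lebesgue_measure]_(x in `[s, u]) (psi x)%:E
    = (phi u)%:E - (phi s)%:E)%E.
  apply: continuous_FTC2 => //.
    move/(continuous_within_itvP _ su2): phic => [_ l r].
    split => //.
    by move=> x; rewrite in_itv /= => xsu; exact: dex (der x xsu).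
  by move=> x; rewrite in_itv /= => xsu; rewrite derive1E; exact: dval (der x xsu).
rewrite EFinB -FTC /J.
have mpsi : measurable_fun `]s, u[ (fun x => (psi x)%:E).
  apply/measurable_EFinP; apply: open_continuous_measurable_fun => // x.
  move/(continuous_within_itvP _ su2): psic => [h _ _].
  by rewrite inE /=; apply: h.
have mff : measurable_fun `]s, u[ (fun x => (ff x)%:E).
  apply: ffE_meas => // x /=; rewrite !in_itv /= => /andP[h1 h2].
  by rewrite (le_trans aS (ltW h1)) (le_trans (ltW h2) ub).
rewrite [X in (X <= _)%E](integral_itv_bndoo true false mpsi).
rewrite [X in (_ <= X)%E](integral_itv_bndoo true false mff).
rewrite integralE.
apply: (@le_trans _ _ (\int[lebesgue_measure]_(x in `]s, u[)
    ((fun x => (psi x)%:E)^\+ x))%E).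
  rewrite -[X in (_ <= X)%E]sube0; apply: leeB => //.
  by apply: integral_ge0 => x _; exact: funeneg_ge0.
have HH := ge0_le_integral lebesgue_measure (measurable_itv `]s, u[) _ (measurable_funepos mpsi) mff.
apply: HH.
  by move=> x _; exact: funepos_ge0.
move=> x; rewrite /= in_itv /= => xsu.
rewrite funeposE ge_max; apply/andP; split; last by rewrite lee_fin ff_ge0.
rewrite lee_fin.
have -> : psi x = dot w ('D_1 g x).
  by rewrite /psi (dval (g'd x (xin x xsu))).
by apply: H; case/andP: xsu => h1 h2; rewrite !ltW.
Qed.

Lemma GLj w j : (j <= k)%N -> forall s u, a <= s -> s <= u -> u <= p j ->
  (forall x, s <= x <= u -> dot w ('D_1 g x) <= ff x) ->
  ((dot w (g u) - dot w (g s))%:E <= J s u)%E.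
Proof.
elim: j => [_|j IH jk] s u aS su up H.
  rewrite p0 in up.
  have -> : s = u by apply/eqP; rewrite eq_le su (le_trans up aS).
  by rewrite subrr J_ge0.
have pj := pinc _ jk.
have /andP[_ ub'] := p_ab j.+1 jk.
have ub := le_trans up ub'.
case: (leP u (p j)) => [upj | pju].
  exact: IH (ltnW jk) s u aS su upj H.
case: (leP (p j) s) => [pjs | spj].
  exact: SP w j s u jk pjs su up H.
rewrite (J_add s (p j) u aS (ltW spj) (ltW pju) ub).
have -> : dot w (g u) - dot w (g s) =
   (dot w (g (p j)) - dot w (g s)) + (dot w (g u) - dot w (g (p j))) by ring.
rewrite EFinD; apply: leeD.
  have H1 : forall x, s <= x <= p j -> dot w ('D_1 g x) <= ff x.
    by move=> x /andP[h1 h2]; apply: H; rewrite h1 (le_trans h2 (ltW pju)).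
  exact: (IH (ltnW jk) s (p j) aS (ltW spj) (lexx _) H1).
have H2 : forall x, p j <= x <= u -> dot w ('D_1 g x) <= ff x.
  by move=> x /andP[h1 h2]; apply: H; rewrite h2 (le_trans (ltW spj) h1).
exact: (SP w j (p j) u jk (lexx _) (ltW pju) up H2).
Qed.

Lemma GL w s u : a <= s -> s <= u -> u <= b ->
  (forall x, s <= x <= u -> dot w ('D_1 g x) <= ff x) ->
  ((dot w (g u) - dot w (g s))%:E <= J s u)%E.
Proof.
move=> aS su ub H; apply: (GLj w k (leqnn k)) => //; by rewrite pk.
Qed.

Lemma step t t' : a <= t -> t < t' -> t' <= b ->
  enorm (g t' - g t) = Rf (g t) / 2 ->
  (forall u, t <= u <= t' -> enorm (g u - g t) <= Rf (g t) / 2) ->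
  (1%:E <= 3%:E * J t t')%E.
Proof.
move=> aT tt' t'b hE hB.
set Rt := Rf (g t).
have Rt0 : 0 < Rt by exact: Rf_pos.
set Del := g t' - g t.
set c := 4 / (3 * Rt ^+ 2).
have c0 : 0 <= c by rewrite /c divr_ge0 // mulr_ge0 // sqr_ge0.
set w := c *: Del.
have key := GL w t t' aT (ltW tt') t'b.
have H : forall x, t <= x <= t' -> dot w ('D_1 g x) <= ff x.
  move=> x xin.
  set eD := enorm ('D_1 g x).
  have eD0 : 0 <= eD by exact: enorm_ge0.
  set Rfx := Rf (g x).
  have Rfx0 : 0 < Rfx by exact: Rf_pos.
  have Rfxle : Rfx <= 3 * Rt / 2.
    have := Rf_lip (g x) (g t); have := hB x xin.
    rewrite -/Rfx -/Rt => h1 h2.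
    have := le_trans (ler_norm _) h2; lra.
  rewrite /ff -/eD -/Rfx ler_pdivlMr // /w dotZl.
  have X := CS Del ('D_1 g x); rewrite -/eD /Del hE -/Rt -/Del in X.
  apply: (@le_trans _ _ (c * ((Rt / 2 * eD) * (3 * Rt / 2)))).
    rewrite -[leLHS]mulrA ler_wpM2l //.
    apply: (@le_trans _ _ ((Rt / 2 * eD) * Rfx)).
      by rewrite ler_wpM2r // ltW.
    by rewrite ler_wpM2l // mulr_ge0 // divr_ge0 // ltW.
  have -> : c * (Rt / 2 * eD * (3 * Rt / 2)) = eD.
    by rewrite /c; field; rewrite gt_eqF.
  exact: lexx.
have E1 : dot w (g t') - dot w (g t) = 1 / 3.
  rewrite -dotBr -/Del /w dotZl dot_self hE /c -/Rt.
  by field; rewrite gt_eqF.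
move: (H) => /key; rewrite E1 => K.
have E3 : (3 * (1 / 3) = 1 :> R) by field.
have : (((3 : R) * (1 / 3))%:E <= 3%:E * J t t')%E.
  by rewrite EFinM; apply: lee_wpmul2l.
by rewrite E3.
Qed.

End Integ.

Theorem lemma1p3 (R : realType) (d : nat) (Rf : 'rV[R]_d -> R)
    (Rf_pos : forall x, 0 < Rf x)
    (Rf_lip : forall x y, `|Rf x - Rf y| <= enorm (x - y))
    (a b : R) (ab : a < b) (g : R -> 'rV[R]_d)
    (g_pc1 : piecewise_C1 a b g) :
  exists N : nat, has_index Rf b g a N /\
    ((N%:R)%:E <= 3%:E * arc_integral Rf a b g + 1%:E)%E.
Proof.
case: g_pc1 => gc [k [p [p0 pk pinc gd]]].
pose P := fun t => exists n : nat, has_index Rf b g t n /\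
  ((n%:R)%:E <= 3%:E * J Rf g t b + 1%:E)%E.
suff Pa : P a by case: Pa => n [hn bn]; exists n; split.
have stepP : forall t, a <= t <= b -> ~ P t -> exists t',
    [/\ a <= t' <= b, t < t', ~ P t' & enorm (g t' - g t) = Rf (g t) / 2].
  move=> t /andP[aT tb] nPt.
  have nst : ~ stays_in_ball Rf b g t.
    move=> st; apply: nPt; exists 1%N; split; first by constructor.
    by apply: leeDr; apply: mule_ge0 => //; exact: J_ge0.
  have [t' [fos tt' hB]] := first_hit Rf Rf_pos a b g gc t
    (introT andP (conj aT tb)) nst.
  have fos' := fos; case: fos' => /andP[tt'1 t'b] ht' _.
  exists t'; split => //.
    by rewrite (le_trans aT tt'1) t'b.
  move=> [n [hn bn]]; apply: nPt; exists n.+1; split.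
    exact: has_index_step nst fos hn.
  have st := step Rf Rf_pos Rf_lip a b g gc k p p0 pk pinc gd t t' aT tt' t'b ht' hB.
  rewrite (J_add Rf Rf_pos Rf_lip a b g k p p0 pk pinc gd t t' b aT tt'1 t'b (lexx b)).
  rewrite ge0_muleDr; [|exact: J_ge0|exact: J_ge0].
  rewrite -natr1 EFinD -addeA addeC.
  exact: leeD.
apply: contrapT => nPa.
pose T := [set t | a <= t <= b /\ ~ P t].
have Ta : T a by split => //; rewrite lexx ltW.
have ubT : ubound T b by move=> t [/andP[]].
have hsT : has_sup T by split; [exists a | exists b].
pose s := sup T.
have as_ : a <= s by exact: sup_upper_bound.
have sb : s <= b by apply: ge_sup => //; exists a.
pose rho := Rf (g s).
have rho0 : 0 < rho by exact: Rf_pos.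
have K0 := @Kd_gt0 R d.
have e0 : 0 < rho / 8 / (@Kd R d) by rewrite !divr_gt0.
have sin : `[a, b]%classic s by rewrite /= in_itv /= as_ sb.
have [del del0 Hdel] := within_pt gc sin _ e0.
have close : forall y, a <= y <= b -> `|s - y| < del -> enorm (g s - g y) < rho / 8.
  move=> y yin sy; have := Hdel y; rewrite /= in_itv /= yin => /(_ isT sy).
  rewrite ltr_pdivlMr // mulrC => h.
  exact: le_lt_trans (enorm_le _) h.
have [t Tt st] := sup_adherent del0 hsT.
have ts : t <= s by exact: sup_upper_bound.
move: Tt; rewrite /T /= => -[/andP[aT tb] nPt].
have [t' [/andP[aT' t'b] tt' nPt' ht']] := stepP t (introT andP (conj aT tb)) nPt.
have t's : t' <= s by apply: sup_upper_bound => //; split => //; rewrite aT'.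
have c1 := close t (introT andP (conj aT tb)).
have c2 := close t' (introT andP (conj aT' t'b)).
have st' : s - del < t := st.
have d1 : `|s - t| < del by rewrite ger0_norm ?subr_ge0 //; lra.
have d2 : `|s - t'| < del by rewrite ger0_norm ?subr_ge0 //; lra.
have {}c1 := c1 d1; have {}c2 := c2 d2.
have L := Rf_lip (g s) (g t); rewrite -/rho in L.
have tri := enormD (g t' - g s) (g s - g t).
rewrite addrA subrK ht' enormB in tri.
have := ler_normlW L.
lra.
Qed.
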